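(* For any fitness graph $\mathcal{G}$ and any seed set $S\subseteq V$, the Heterogeneous Moran process and the Loopy process started from $S$ have the same fixation probability.
   Context: A fitness graph is $\mathcal{G}=(G,(m,r))$ where $G=(V,E,w)$ is a strongly connected directed graph, $w(u,\cdot)$ is a probability distribution over out-neighbours of $u$, and $r,m\colon V\to(0,\infty)$. Without loss of generality every node has a self-loop $(u,u)\in E$ (with $w(u,u)=0$ if it was absent). For a configuration $X\subseteq V$ (set of mutants), $f_X(u)=m(u)$ if $u\in X$, else $r(u)$. Heterogeneous Moran process: from $X$, pick $u$ with probability $f_X(u)/\sum_v f_X(v)$, then $v$ with probability $w(u,v)$, and $v$ takes the type of $u$. Loopy process: let $f_{\max}=\max_{u\in V}\max\{r(u),m(u)\}$; from $X$, pick $u$ uniformly with probability $1/|V|$, then pick $v$ with probability $w_X(u,v)$, where $w_X(u,v)=\frac{f_X(u)}{f_{\max}}w(u,v)$ for $v\ne u$ and $w_X(u,u)=1-\frac{f_X(u)}{f_{\max}}(1-w(u,u))$, and $v$ takes the type of $u$. Both start at $S$; the fixation probability is the probability of eventually reaching configuration $V$. *)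

(* Defs.v *)
From HB Require Import structures.
From mathcomp Require Import all_boot all_order all_algebra.
From mathcomp Require Import all_classical all_reals topology normedtype sequences.
Set Implicit Arguments. Unset Strict Implicit. Unset Printing Implicit Defensive.
Import Order.TTheory GRing.Theory Num.Theory numFieldNormedType.Exports.
Local Open Scope ring_scope.

(* A fitness graph: V a finite vertex type, E the edge relation, w the edge
   weights (w u v = 0 when (u,v) is not an edge), r and m the resident and
   mutant fitnesses. *)
Definition is_fitness_graph (R : realType) (V : finType) (E : rel V)
    (w : V -> V -> R) (r m : V -> R) : Prop :=
  (forall u v, connect E u v) /\
  (forall u v, 0 <= w u v) /\
  (forall u v, ~~ E u v -> w u v = 0) /\
  (forall u, \sum_(v : V) w u v = 1) /\
  (forall u, 0 < r u) /\ (forall u, 0 < m u).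

Definition fit (R : realType) (V : finType) (r m : V -> R) (X : {set V}) (u : V) : R :=
  if u \in X then m u else r u.

(* configuration after u reproduces onto v *)
Definition upd (V : finType) (X : {set V}) (u v : V) : {set V} :=
  if u \in X then v |: X else X :\ v.

Definition moran_P (R : realType) (V : finType) (w : V -> V -> R) (r m : V -> R)
    (X Y : {set V}) : R :=
  \sum_(u : V) \sum_(v : V)
     (if upd X u v == Y then
        fit r m X u / (\sum_(x : V) fit r m X x) * w u v else 0).

Definition fmax (R : realType) (V : finType) (r m : V -> R) : R :=
  \big[Num.max/0]_(u : V) Num.max (r u) (m u).

Definition loopy_w (R : realType) (V : finType) (w : V -> V -> R) (r m : V -> R)
    (X : {set V}) (u v : V) : R :=
  if v == u then 1 - fit r m X u / fmax r m * (1 - w u u)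
  else fit r m X u / fmax r m * w u v.

Definition loopy_P (R : realType) (V : finType) (w : V -> V -> R) (r m : V -> R)
    (X Y : {set V}) : R :=
  \sum_(u : V) \sum_(v : V)
     (if upd X u v == Y then (#|V|%:R)^-1 * loopy_w w r m X u v else 0).

Fixpoint hit (R : realType) (V : finType) (P : {set V} -> {set V} -> R)
    (n : nat) (X : {set V}) : R :=
  if X == [set: V] then 1 else
  match n with
  | 0 => 0
  | n'.+1 => \sum_(Y : {set V}) P X Y * hit P n' Y
  end.

Definition fixprob (R : realType) (V : finType) (P : {set V} -> {set V} -> R)
    (S : {set V}) : R :=
  lim ((fun n : nat => hit P n S) @ \oo)%classic.

(* Main.v *)
Require Import Defs.
From HB Require Import structures.
From mathcomp Require Import all_boot all_order all_algebra.
From mathcomp Require Import all_classical all_reals topology normedtype sequences.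
From mathcomp Require Import ring lra.
Import Order.TTheory GRing.Theory Num.Theory numFieldNormedType.Exports.
Local Open Scope ring_scope.

Lemma hit_setT (R : realType) (V : finType) (P : {set V} -> {set V} -> R) n :
  hit P n [set: V] = 1.
Proof. by case: n => [|n] /=; rewrite eqxx. Qed.

Lemma cvg_bigsum (R : realType) (I : Type) (r : seq I) (f : I -> nat -> R)
  (a : I -> R) : (forall i, (f i n @[n --> \oo] --> a i)%classic) ->
  ((fun n => \sum_(i <- r) f i n) @ \oo --> \sum_(i <- r) a i)%classic.
Proof.
move=> H; elim: r => [|i r IH].
  rewrite big_nil; under eq_fun do rewrite big_nil; exact: cvg_cst.
rewrite big_cons; under eq_fun do rewrite big_cons.
exact: (cvgD (H i) IH).
Qed.

Section Gen.
Variables (R : realType) (V : finType) (P : {set V} -> {set V} -> R).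
Hypothesis P0 : forall X Y, 0 <= P X Y.
Hypothesis P1 : forall X, \sum_Y P X Y <= 1.

Definition supersol (g : {set V} -> R) :=
  (forall X, 0 <= g X) /\ 1 <= g [set: V] /\
  forall X, X != [set: V] -> \sum_Y P X Y * g Y <= g X.

Lemma hit_ge0 n X : 0 <= hit P n X.
Proof.
elim: n X => [|n IH] X /=; case: ifP => // _.
by apply: sumr_ge0 => Y _; rewrite mulr_ge0.
Qed.

Lemma hit_le g : supersol g -> forall n X, hit P n X <= g X.
Proof.
move=> [g0 [g1 gs]]; elim=> [|n IH] X /=; case: ifPn => [/eqP->//|nX] //.
apply: le_trans (gs _ nX); apply: ler_sum => Y _; exact: ler_wpM2l.
Qed.

Lemma hit_mono n X : hit P n X <= hit P n.+1 X.
Proof.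
elim: n X => [|n IH] X /=; case: ifP => // _.
  by apply: sumr_ge0 => Y _; apply: mulr_ge0 => //; exact: (hit_ge0 0).
by apply: ler_sum => Y _; exact: ler_wpM2l.
Qed.

Lemma hit_nd X : nondecreasing_seq (fun n => hit P n X).
Proof. by apply/nondecreasing_seqP => n; exact: hit_mono. Qed.

Lemma super1 : supersol (fun _ => 1).
Proof.
split=> //; split=> // X _.
by under eq_bigr do rewrite mulr1.
Qed.

Lemma hit_cvg X : cvgn (fun n => hit P n X).
Proof.
apply: nondecreasing_is_cvgn; first exact: hit_nd.
exists 1 => _ [n _ <-]. exact: (hit_le (fun _ => 1) super1 n X).
Qed.

Lemma fix_le g : supersol g -> forall X, fixprob P X <= g X.
Proof.
move=> sg X; rewrite /fixprob; apply: limr_le (hit_cvg X) _.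
by apply: nearW => n; exact: hit_le.
Qed.

Lemma fix_ge_hit n X : hit P n X <= fixprob P X.
Proof. exact: (nondecreasing_cvgn_le (hit_nd X) (hit_cvg X) n). Qed.

Lemma fix_super : supersol (fixprob P).
Proof.
split; first by move=> X; exact: le_trans (hit_ge0 0 X) (fix_ge_hit 0 X).
split; first by rewrite -{1}(hit_setT _ _ P 0) fix_ge_hit.
move=> X nX.
have C : ((fun n => \sum_Y P X Y * hit P n Y) @ \oo -->
          \sum_Y P X Y * fixprob P Y)%classic.
  apply: cvg_bigsum => Y; apply: cvgMl_tmp; exact: (hit_cvg Y).
apply: (cvgr_to_le C); apply: nearW => n.
have -> : \sum_Y P X Y * hit P n Y = hit P n.+1 X by rewrite /= (negbTE nX).
exact: fix_ge_hit.
Qed.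

End Gen.

Lemma upd_id (V : finType) (X : {set V}) u : upd X u u = X.
Proof.
rewrite /upd; case: ifP => uX; apply/setP => x; rewrite !inE;
  case: eqP => // ->; by rewrite uX.
Qed.

Lemma sum_upd (R : realType) (V : finType) (X : {set V}) (a : V -> V -> R)
  (g : {set V} -> R) :
  \sum_Y (\sum_u \sum_v (if upd X u v == Y then a u v else 0)) * g Y =
  \sum_u \sum_v a u v * g (upd X u v).
Proof.
rewrite (eq_bigr (fun Y => \sum_u \sum_v
   (if upd X u v == Y then a u v * g Y else 0))); last first.
  move=> Y _; rewrite mulr_suml; apply: eq_bigr => u _; rewrite mulr_suml.
  by apply: eq_bigr => v _; case: ifP; rewrite ?mul0r.
rewrite exchange_big; apply: eq_bigr => u _; rewrite exchange_big.
apply: eq_bigr => v _.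
rewrite (bigD1 (upd X u v)) //= eqxx big1 ?addr0 // => Y /negbTE.
by rewrite eq_sym => ->.
Qed.

Lemma sum_constV (R : realType) (V : finType) (c : R) :
  \sum_(u : V) c = #|V|%:R * c.
Proof. by rewrite sumr_const mulr_natl. Qed.

Section Spec.
Variables (R : realType) (V : finType) (E : rel V) (w : V -> V -> R)
  (r m : V -> R) (u0 : V).
Hypothesis w0 : forall u v, 0 <= w u v.
Hypothesis w1 : forall u, \sum_v w u v = 1.
Hypothesis r0 : forall u, 0 < r u.
Hypothesis m0 : forall u, 0 < m u.

Lemma fit_gt0 X u : 0 < fit r m X u.
Proof. by rewrite /fit; case: ifP. Qed.

Lemma fit_le X u : fit r m X u <= fmax r m.
Proof.
apply: le_trans (le_bigmax _ _ u).
by rewrite /fit; case: ifP => _; rewrite le_max lexx ?orbT.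
Qed.

Lemma fmax_gt0 : 0 < fmax r m.
Proof. exact: (lt_le_trans (fit_gt0 [set: V] u0) (fit_le [set: V] u0)). Qed.

Lemma F_gt0 X : 0 < \sum_x fit r m X x.
Proof.
rewrite (bigD1 u0) //=; apply: (lt_le_trans (fit_gt0 X u0)); rewrite lerDl.
by apply: sumr_ge0 => x _; apply: ltW; exact: fit_gt0.
Qed.

Lemma n_gt0 : 0 < (#|V|%:R : R).
Proof. by rewrite ltr0n; apply/card_gt0P; exists u0. Qed.

Lemma lw_sum X u (g : {set V} -> R) :
  \sum_v loopy_w w r m X u v * g (upd X u v) =
  g X + fit r m X u / fmax r m * (\sum_v w u v * g (upd X u v) - g X).
Proof.
rewrite (bigD1 u) //= [in RHS](bigD1 u) //= upd_id /loopy_w eqxx.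
rewrite (eq_bigr (fun v => fit r m X u / fmax r m * (w u v * g (upd X u v))));
  last by move=> v /negbTE ->; rewrite mulrA.
rewrite -mulr_sumr; ring.
Qed.

Definition cc X := (\sum_x fit r m X x) / (#|V|%:R * fmax r m).

Lemma cc_gt0 X : 0 < cc X.
Proof.
by rewrite /cc divr_gt0 ?F_gt0 // mulr_gt0 ?n_gt0 ?fmax_gt0.
Qed.

Lemma key X (g : {set V} -> R) :
  \sum_Y loopy_P w r m X Y * g Y =
  g X + cc X * (\sum_Y moran_P w r m X Y * g Y - g X).
Proof.
rewrite /loopy_P /moran_P !sum_upd.
set F := \sum_x fit r m X x.
set n : R := #|V|%:R.
set fm := fmax r m.
set A := \sum_u fit r m X u * (\sum_v w u v * g (upd X u v)).
have E1 : \sum_u \sum_v n^-1 * loopy_w w r m X u v * g (upd X u v) =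
          n^-1 * (n * g X + fm^-1 * (A - F * g X)).
  rewrite (eq_bigr (fun u => n^-1 * (\sum_v loopy_w w r m X u v * g (upd X u v))));
    last by move=> u _; rewrite mulr_sumr; apply: eq_bigr => v _; rewrite mulrA.
  rewrite -mulr_sumr; congr (_ * _).
  under eq_bigr do rewrite lw_sum.
  rewrite big_split /= sum_constV; congr (_ + _).
  have -> : F * g X = \sum_u fit r m X u * g X by rewrite /F mulr_suml.
  rewrite /A -sumrB mulr_sumr; apply: eq_bigr => u _; rewrite /fm; ring.
have E2 : \sum_u \sum_v fit r m X u / F * w u v * g (upd X u v) = F^-1 * A.
  rewrite /A mulr_sumr; apply: eq_bigr => u _; rewrite !mulr_sumr.
  by apply: eq_bigr => v _; ring.
rewrite E1 E2 /cc -/F -/n -/fm.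
have nF : F != 0 by rewrite gt_eqF // F_gt0.
have nn : n != 0 by rewrite gt_eqF // n_gt0.
have nfm : fm != 0 by rewrite gt_eqF // fmax_gt0.
by field; rewrite nF nn nfm.
Qed.
End Spec.

Section Spec2.
Variables (R : realType) (V : finType) (E : rel V) (w : V -> V -> R)
  (r m : V -> R) (u0 : V).
Hypothesis w0 : forall u v, 0 <= w u v.
Hypothesis w1 : forall u, \sum_v w u v = 1.
Hypothesis r0 : forall u, 0 < r u.
Hypothesis m0 : forall u, 0 < m u.

Let Mp := moran_P w r m.
Let Lp := loopy_P w r m.

Lemma M0 X Y : 0 <= Mp X Y.
Proof.
apply: sumr_ge0 => u _; apply: sumr_ge0 => v _; case: ifP => // _.
apply: mulr_ge0 => //; apply: divr_ge0; first exact: ltW (@fit_gt0 _ _ _ _ r0 m0 X u).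
exact: ltW (@F_gt0 _ _ _ _ u0 r0 m0 X).
Qed.

Lemma Msum X : \sum_Y Mp X Y = 1.
Proof.
transitivity (\sum_Y Mp X Y * (fun _ => 1) Y); first by apply: eq_bigr => Y _ /=; rewrite mulr1.
rewrite /Mp /moran_P sum_upd.
under eq_bigr do under eq_bigr do rewrite /= mulr1.
under eq_bigr do rewrite -mulr_sumr w1 mulr1.
by rewrite -mulr_suml mulfV // lt0r_neq0 // (@F_gt0 _ _ _ _ u0 r0 m0 X).
Qed.

Lemma wuu_le1 u : w u u <= 1.
Proof.
rewrite -(w1 u) (bigD1 u) //= lerDl; exact: sumr_ge0.
Qed.

Lemma L0 X Y : 0 <= Lp X Y.
Proof.
apply: sumr_ge0 => u _; apply: sumr_ge0 => v _; case: ifP => // _.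
apply: mulr_ge0; first by rewrite invr_ge0 ler0n.
have k0 : 0 <= fit r m X u / fmax r m.
  apply: divr_ge0; first exact: ltW (@fit_gt0 _ _ _ _ r0 m0 X u).
  exact: ltW (@fmax_gt0 _ _ _ _ u0 r0 m0).
rewrite /loopy_w; case: ifP => _; last exact: mulr_ge0.
rewrite subr_ge0; apply: mulr_ile1 => //.
- by rewrite subr_ge0 wuu_le1.
- by rewrite ler_pdivrMr ?mul1r ?fit_le // (@fmax_gt0 _ _ _ _ u0 r0 m0).
- by rewrite lerBlDr lerDl.
Qed.

Lemma Lsum X : \sum_Y Lp X Y = 1.
Proof.
transitivity (\sum_Y Lp X Y * (fun _ => 1) Y); first by apply: eq_bigr => Y _ /=; rewrite mulr1.
rewrite /Lp (@key _ _ w _ _ u0 r0 m0); under eq_bigr do rewrite /= mulr1.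
by rewrite Msum subrr mulr0 addr0.
Qed.

Lemma main_ne S : fixprob Mp S = fixprob Lp S.
Proof.
have PM0 := M0; have PL0 := L0.
have PM1 : forall X, \sum_Y Mp X Y <= 1 by move=> X; rewrite Msum.
have PL1 : forall X, \sum_Y Lp X Y <= 1 by move=> X; rewrite Lsum.
have [hM0 [hM1 hMs]] := @fix_super _ _ _ PM0 PM1.
have [hL0 [hL1 hLs]] := @fix_super _ _ _ PL0 PL1.
apply/eqP; rewrite eq_le; apply/andP; split.
- apply: (@fix_le _ _ _ PM0 PM1); split=> //; split=> // X nX.
  have := hLs X nX; rewrite /Lp (@key _ _ w _ _ u0 r0 m0) gerDl.
  by rewrite pmulr_rle0 ?(@cc_gt0 _ _ _ _ u0 r0 m0) // subr_le0.
- apply: (@fix_le _ _ _ PL0 PL1); split=> //; split=> // X nX.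
  rewrite /Lp (@key _ _ w _ _ u0 r0 m0) gerDl; apply: mulr_ge0_le0; first exact: ltW (@cc_gt0 _ _ _ _ u0 r0 m0 X).
  by rewrite subr_le0; exact: hMs.
Qed.
End Spec2.

Theorem lemma5 (R : realType) (V : finType) (E : rel V) (w : V -> V -> R)
    (r m : V -> R) (S : {set V}) :
  is_fitness_graph E w r m ->
  fixprob (moran_P w r m) S = fixprob (loopy_P w r m) S.
Proof.
move=> [_ [w0 [_ [w1 [r0 m0]]]]].
have [->|nS] := eqVneq S [set: V].
  have HE : (fun n => hit (moran_P w r m) n [set: V]) =
           (fun n => hit (loopy_P w r m) n [set: V]).
    by apply: funext => n; rewrite !hit_setT.
  by rewrite /fixprob HE.
have [u0 _] : exists u0, u0 \notin S.
  apply/existsP; apply: contraR nS => /existsPn H.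
  by apply/eqP/setP => x; rewrite inE; move: (H x); rewrite negbK.
exact: (@main_ne _ _ w r m u0 w0 w1 r0 m0).
Qed.
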